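(* Let $\varepsilon>0$ and $K=\lceil 3mn/\varepsilon\rceil$. Let items $g_{ji}\in M$ (ordered pairs $j\ne i$) be given and let $\mathcal{A}=(A_1,\dots,A_n)$ be an allocation of $M$ with $g_{ji}\in A_j$ for all $j\ne i$. If the allocation $\mathcal{A}'=(A_1\cup\{d_1\},\dots,A_n\cup\{d_n\})$ is envy-free with respect to the rounded valuations $\overline v_1,\dots,\overline v_n$ (i.e. $\overline v_i(A_i\cup\{d_i\})\ge\overline v_i(A_j\cup\{d_j\})$ for all $i\ne j$), then for all $i\ne j$, $v_i(A_i)\ge(1-\varepsilon)\,v_i(A_j\setminus\{g_{ji}\})$; in particular $\mathcal{A}$ is $(1-\varepsilon)$-approximate EF1 with respect to $v_1,\dots,v_n$.
   Context: Agents $[n]$, items $M=[m]$, additive valuations $v_i$. For $\alpha\in(0,1]$, an allocation is $\alpha$-approximate EF1 if for all $i\ne j$ with $A_j\ne\emptyset$ there exists $g\in A_j$ with $v_i(A_i)\ge\alpha\,v_i(A_j\setminus\{g\})$. Rounded instance: given integer $K\ge1$ and items $g_{ji}\in M$ for ordered pairs $j\ne i$, let $Y_i=\{g_{ji}: j\ne i\}$, $V_i=v_i(M\setminus Y_i)$, $\tau_i=V_i/K$. Define additive $\overline v_i$ on $M\cup\{d_1,\dots,d_n\}$ ($d_1,\dots,d_n$ new dummy items): for $o\in M\setminus Y_i$, $\overline v_i(o)=\max\{k\tau_i:k\in\mathbb{Z}_{\ge0},\,k\tau_i\le v_i(o)\}$ (and $\overline v_i(o)=0$ if $\tau_i=0$);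 $\overline v_i(o)=0$ for $o\in Y_i$; $\overline v_i(d_i)=m\tau_i$ and $\overline v_i(d_j)=0$ for $j\ne i$. *)

(* Defs.v *)
From mathcomp Require Import all_boot all_order all_algebra.
Set Implicit Arguments. Unset Strict Implicit. Unset Printing Implicit Defensive.
Import Order.TTheory GRing.Theory Num.Theory.
Local Open Scope ring_scope.

Section Fair.
Variables (R : archiRealFieldType) (n m : nat).

Definition bval (v : 'I_n -> 'I_m -> R) (i : 'I_n) (S : {set 'I_m}) : R :=
  \sum_(o in S) v i o.

Definition is_allocation (A : 'I_n -> {set 'I_m}) : Prop :=
  (forall i j, i != j -> [disjoint A i & A j]) /\
  (\bigcup_(i < n) A i = [set: 'I_m]).

Definition approx_EF1 (v : 'I_n -> 'I_m -> R) (alpha : R)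
    (A : 'I_n -> {set 'I_m}) : Prop :=
  forall i j, i != j -> A j != set0 ->
    exists2 g, g \in A j & bval v i (A i) >= alpha * bval v i (A j :\ g).

Definition Yset (g : 'I_n -> 'I_n -> 'I_m) (i : 'I_n) : {set 'I_m} :=
  [set g j i | j in [set j | j != i]].

Definition Vval v g i : R := bval v i (~: Yset g i).

Definition tau v g (K : nat) i : R := Vval v g i / K%:R.

(* items of the rounded instance: inl o for o in M, inr j for dummy d_j *)
Definition ext_item := ('I_m + 'I_n)%type.

(* rounded valuation; for tau > 0 and v >= 0,
   max{k tau : k in Z>=0, k tau <= v} = floor(v / tau) * tau *)
Definition vbar v g (K : nat) (i : 'I_n) (x : ext_item) : R :=
  match x with
  | inl o =>
      if o \in Yset g i then 0
      else if tau v g K i == 0 then 0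
      else (Num.floor (v i o / tau v g K i))%:~R * tau v g K i
  | inr j => if j == i then m%:R * tau v g K i else 0
  end.

Definition val_ext v g K i (S : {set ext_item}) : R :=
  \sum_(x in S) vbar v g K i x.

Definition ext_bundle (A : 'I_n -> {set 'I_m}) (j : 'I_n) : {set ext_item} :=
  inr j |: [set inl o | o in A j].

Definition Kof (eps : R) : nat := `|Num.ceil (3 * m%:R * n%:R / eps)|%N.

End Fair.

(* Main.v *)
Require Import Defs.
From mathcomp Require Import all_boot all_order all_algebra.
From mathcomp Require Import ring lra.
Import Order.TTheory GRing.Theory Num.Theory.
Local Open Scope ring_scope.

Section Aux.
Variables (R : archiRealFieldType) (n m : nat).
Variables (v : 'I_n -> 'I_m -> R) (g : 'I_n -> 'I_n -> 'I_m) (K : nat).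
Hypothesis v0 : forall i o, 0 <= v i o.
Hypothesis Kpos : (0 < K)%N.

Lemma t_ge0 i : 0 <= tau v g K i.
Proof. by rewrite /tau /Vval /bval divr_ge0 ?ler0n ?sumr_ge0. Qed.

Lemma V_eq i : Vval v g i = tau v g K i * K%:R.
Proof. by rewrite /tau divfK // pnatr_eq0 -lt0n. Qed.

Lemma vbar_le i o : vbar v g K i (inl o) <= v i o.
Proof.
rewrite /vbar; case: ifP => _; first exact: v0.
case: ifP => /eqP t0; first exact: v0.
have tp : 0 < tau v g K i by rewrite lt_def; apply/andP; split; [apply/eqP|apply: t_ge0].
by rewrite -ler_pdivlMr // floor_le.
Qed.

Lemma vbar_ge0 i o : 0 <= vbar v g K i (inl o).
Proof.
rewrite /vbar; case: ifP => _ //; case: ifP => /eqP t0 //.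
have tp : 0 < tau v g K i by rewrite lt_def; apply/andP; split; [apply/eqP|apply: t_ge0].
by rewrite mulr_ge0 ?(ltW tp) // ler0z floor_ge0 divr_ge0 ?(ltW tp).
Qed.

Lemma vbar_ge i o : o \notin Yset g i -> v i o - tau v g K i <= vbar v g K i (inl o).
Proof.
move=> oY; rewrite /vbar (negbTE oY); case: ifP => /eqP t0.
  have : v i o <= Vval v g i.
    rewrite /Vval /bval (bigD1 o) ?inE //= lerDl sumr_ge0 //.
  by rewrite V_eq t0 mul0r subr0.
have tp : 0 < tau v g K i by rewrite lt_def; apply/andP; split; [apply/eqP|apply: t_ge0].
have := floorD1_gt (v i o / tau v g K i).
rewrite intrD -ltrBlDr -(ltr_pM2r tp) mulrBl divfK ?gt_eqF // mul1r => /ltW.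
done.
Qed.

Lemma val_ext_bundle (A : 'I_n -> {set 'I_m}) i j :
  val_ext v g K i (ext_bundle A j) =
  (if j == i then m%:R * tau v g K i else 0) + \sum_(o in A j) vbar v g K i (inl o).
Proof.
rewrite /val_ext /ext_bundle big_setU1 /=; last by apply/imsetP => -[].
by rewrite big_imset //= => x y _ _ [].
Qed.

End Aux.

Theorem lemma4 (R : archiRealFieldType) (n m : nat)
    (v : 'I_n -> 'I_m -> R) (eps : R)
    (g : 'I_n -> 'I_n -> 'I_m) (A : 'I_n -> {set 'I_m}) :
  (forall i o, 0 <= v i o) ->
  0 < eps ->
  is_allocation A ->
  (forall j i, j != i -> g j i \in A j) ->
  (forall i j, i != j ->
     val_ext v g (Kof m n eps) i (ext_bundle A i)
       >= val_ext v g (Kof m n eps) i (ext_bundle A j)) ->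
  (forall i j, i != j -> bval v i (A i) >= (1 - eps) * bval v i (A j :\ g j i))
  /\ approx_EF1 v (1 - eps) A.
Proof.
move=> v0 ep [disjA covA] gA EF.
have main : forall i j, i != j -> bval v i (A i) >= (1 - eps) * bval v i (A j :\ g j i).
  move=> i j ij.
  have m1 : (0 < m)%N by apply: leq_ltn_trans (leq0n _) (ltn_ord (g i i)).
  have n1 : (0 < n)%N by apply: leq_ltn_trans (leq0n _) (ltn_ord i).
  set K := Kof m n eps.
  set x := 3 * n%:R * m%:R / eps.
  have xp : 0 < x by rewrite divr_gt0 // !mulr_gt0 // ltr0n.
  have Kx : x <= K%:R.
    rewrite /K /Kof natr_absz ger0_norm; first exact: ceil_ge.
    by rewrite ceil_ge0 (lt_trans _ xp) // ltrN10.
  have Kpos : (0 < K)%N by rewrite -(ltr0n R) (lt_le_trans xp Kx).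
  set t := tau v g K i.
  have t0 : 0 <= t by apply: t_ge0.
  set S := fun j => \sum_(o in A j) vbar v g K i (inl o).
  have Si : S i <= bval v i (A i) by apply: ler_sum => o _; apply: vbar_le.
  have Si0 : 0 <= S i by apply: sumr_ge0 => o _; apply: vbar_ge0.
  have X0 : 0 <= bval v i (A j :\ g j i) by apply: sumr_ge0.
  have Sj : bval v i (A j :\ g j i) - m%:R * t <= S j.
    have sub : A j :\ g j i \subset A j by apply: subD1set.
    apply: le_trans (_ : \sum_(o in A j :\ g j i) vbar v g K i (inl o) <= _); last first.
      rewrite /S [X in _ <= X](big_setID (A j :\ g j i)) /= (setIidPr sub) lerDl.
      by apply: sumr_ge0 => o _; apply: vbar_ge0.
    apply: le_trans (_ : \sum_(o in A j :\ g j i) (v i o - t) <= _).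
      rewrite sumrB lerD2l lerN2 sumr_const -(mulr_natl t); apply: ler_wpM2r => //.
      by rewrite ler_nat (leq_trans (max_card _)) // card_ord.
    apply: ler_sum => o; rewrite !inE => /andP[og oA]; apply: vbar_ge => //.
    apply/negP => /imsetP[k]; rewrite inE => ki oe.
    have [kj|kj] := eqVneq k j; first by rewrite oe kj eqxx in og.
    have := disjA _ _ kj; rewrite disjoint_subset => /subsetP /(_ o).
    by rewrite oe inE gA // => /(_ isT); rewrite -oe oA.
  have EFij := EF i j ij; rewrite !val_ext_bundle // eqxx eq_sym (negbTE ij) add0r -/(S i) -/(S j) in EFij.
  have Ssum : \sum_(j0 < n) S j0 >= Vval v g i - m%:R * t.
    have -> : \sum_(j0 < n) S j0 = \sum_o vbar v g K i (inl o).
      rewrite /S -partition_disjoint_bigcup // covA.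
      by apply: eq_bigl => o; rewrite inE.
    apply: le_trans (_ : \sum_(o in ~: Yset g i) vbar v g K i (inl o) <= _); last first.
      rewrite [X in _ <= X](bigID (mem (~: Yset g i))) /= lerDl.
      by apply: sumr_ge0 => o _; apply: vbar_ge0.
    apply: le_trans (_ : \sum_(o in ~: Yset g i) (v i o - t) <= _); last first.
      by apply: ler_sum => o; rewrite inE; apply: vbar_ge.
    rewrite sumrB lerD2l lerN2 sumr_const -(mulr_natl t); apply: ler_wpM2r => //.
    by rewrite ler_nat (leq_trans (max_card _)) // card_ord.
  have nS : (m%:R * t + S i) * n%:R >= Vval v g i.
    have : \sum_(j0 < n) ((if j0 == i then m%:R * t else 0) + S j0)
         <= \sum_(j0 < n) (m%:R * t + S i).
      apply: ler_sum => j0 _; have [->|ji] := eqVneq j0 i; first exact: lexx.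
      by have := EF i j0 (ltac:(by rewrite eq_sym)); rewrite !val_ext_bundle // eqxx (negbTE ji).
    rewrite big_split /= sumr_const card_ord mulr_natr -big_mkcond /= big_pred1_eq.
    by move=> H; apply: le_trans H; rewrite -lerBlDl.
  have eV : 3 * n%:R * (m%:R * t) <= eps * Vval v g i.
    rewrite (@V_eq _ _ _ v g K Kpos) -/t.
    have := Kx; rewrite /x ler_pdivrMr // => Kx'.
    have : 0 <= t * (K%:R * eps - 3 * n%:R * m%:R) by rewrite mulr_ge0 // subr_ge0.
    rewrite mulrBr => H.
    by rewrite subr_ge0 in H; apply: le_trans (_ : t * (3 * n%:R * m%:R) <= _); [rewrite le_eqVlt; apply/orP; left; apply/eqP; ring | apply: le_trans H _; rewrite le_eqVlt; apply/orP; left; apply/eqP; ring].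
  have np : 0 < n%:R :> R by rewrite ltr0n.
  set T := m%:R * t in Sj EFij Ssum nS eV.
  have T0 : 0 <= T by rewrite mulr_ge0 ?ler0n.
  set X := bval v i (A j :\ g j i) in X0 Sj *.
  set V := Vval v g i in Ssum nS eV.
  have H1 : 3 * T <= eps * (T + S i).
    rewrite -(ler_pM2r np); apply: le_trans (_ : eps * V <= _).
      by apply: le_trans eV; rewrite le_eqVlt; apply/orP; left; apply/eqP; ring.
    by rewrite -mulrA ler_wpM2l // ltW.
  apply: le_trans Si.
  have [e1|e1] := lerP eps 1; last first.
    by apply: le_trans Si0; rewrite mulr_le0_ge0 // subr_le0 ltW.
  have : X <= S i + 2 * T by lra.
  move=> HX; nra.
split => // i j ij Aj0.
by exists (g j i); [apply: gA; rewrite eq_sym | apply: main].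
Qed.
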